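(* Suppose $\omega\subseteq X\subseteq\beta\omega$ and $X$ is $(\mathfrak c,\omega^* )$-pseudocompact. Then $\operatorname{CL}(X)$ is pseudocompact.
   Context: $\beta\omega$ is the Stone–Čech compactification of the discrete space $\omega$ (ultrafilters on $\omega$), $\omega^*$ the set of free ultrafilters on $\omega$. For $p\in\omega^*$ and a sequence $(B_n:n\in\omega)$ of subsets of a space $X$, $x\in X$ is a $p$-limit of $(B_n)$ if $\{n:V\cap B_n\ne\emptyset\}\in p$ for every neighborhood $V$ of $x$. For a cardinal $\kappa$ and $M\subseteq\omega^*$, $X$ is $(\kappa,M)$-pseudocompact if for every family $\{(V^\alpha_n:n\in\omega):\alpha<\kappa\}$ of sequences of nonempty open subsets of $X$ there is $p\in M$ such that for every $\alpha<\kappa$ the sequence $(V^\alpha_n:n\in\omega)$ has a $p$-limit point in $X$. $\operatorname{CL}(X)$ is the set of nonempty closed subsets of $X$ with the Vietoris topology; pseudocompact means every continuous real-valued function is bounded. *)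

(* Defs.v *)
From Stdlib Require Import Reals List.
Open Scope R_scope.

(** Ultrafilters on omega = nat, and the Stone-Cech compactification beta omega. *)
Definition is_ultrafilter (p : (nat -> Prop) -> Prop) : Prop :=
  p (fun _ => True) /\
  ~ p (fun _ => False) /\
  (forall A B : nat -> Prop, p A -> (forall n, A n -> B n) -> p B) /\
  (forall A B : nat -> Prop, p A -> p B -> p (fun n => A n /\ B n)) /\
  (forall A : nat -> Prop, p A \/ p (fun n => ~ A n)).

Definition betaw : Type := { p : (nat -> Prop) -> Prop | is_ultrafilter p }.

Definition uf (p : betaw) : (nat -> Prop) -> Prop := proj1_sig p.

(** Principal ultrafilter at n (the copy of omega inside beta omega). *)
Definition principal_fun (n : nat) : (nat -> Prop) -> Prop := fun A => A n.

Lemma principal_ultra (n : nat) : is_ultrafilter (principal_fun n).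
Proof.
  unfold is_ultrafilter, principal_fun; repeat split; auto.
  intros A; destruct (Classical_Prop.classic (A n)); auto.
Qed.

Definition principal (n : nat) : betaw := exist _ (principal_fun n) (principal_ultra n).

(** omega^* : free ultrafilters (containing no singleton). *)
Definition free (p : betaw) : Prop := forall n : nat, ~ uf p (fun m => m = n).

Definition open_bw (U : betaw -> Prop) : Prop :=
  forall p, U p -> exists A : nat -> Prop, uf p A /\ forall q, uf q A -> U q.

Definition openX (X : betaw -> Prop) (V : betaw -> Prop) : Prop :=
  exists U, open_bw U /\ forall x, V x <-> (U x /\ X x).

Definition closedX (X : betaw -> Prop) (F : betaw -> Prop) : Prop :=
  (forall x, F x -> X x) /\ openX X (fun x => X x /\ ~ F x).

Definition nbhdX (X : betaw -> Prop) (x : betaw) (W : betaw -> Prop) : Prop :=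
  exists V, openX X V /\ V x /\ forall y, V y -> W y.

Definition p_limit (X : betaw -> Prop) (p : betaw) (B : nat -> betaw -> Prop)
  (x : betaw) : Prop :=
  X x /\ forall W, nbhdX X x W -> uf p (fun n => exists y, W y /\ B n y).

(** (c, omega^* )-pseudocompactness of X; families of size c are indexed by
    nat -> bool (a set of cardinality continuum). *)
Definition c_wstar_pseudocompact (X : betaw -> Prop) : Prop :=
  forall V : (nat -> bool) -> nat -> betaw -> Prop,
    (forall a n, openX X (V a n) /\ exists y, V a n y) ->
    exists p : betaw, free p /\
      forall a, exists x, p_limit X p (V a) x.

(** CL(X): nonempty closed subsets of X, with the Vietoris topology. *)
Definition CL (X : betaw -> Prop) : Type :=
  { F : betaw -> Prop | closedX X F /\ exists x, F x }.

Definition CLset {X} (F : CL X) : betaw -> Prop := proj1_sig F.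

Definition vietoris_subbasic (X : betaw -> Prop) (S : CL X -> Prop) : Prop :=
  exists U, openX X U /\
    ((forall F, S F <-> (forall x, CLset F x -> U x)) \/
     (forall F, S F <-> (exists x, CLset F x /\ U x))).

Definition vietoris_open (X : betaw -> Prop) (O : CL X -> Prop) : Prop :=
  forall F, O F -> exists l : list (CL X -> Prop),
    Forall (vietoris_subbasic X) l /\ Forall (fun S => S F) l /\
    forall G, Forall (fun S => S G) l -> O G.

Definition CL_pseudocompact (X : betaw -> Prop) : Prop :=
  forall f : CL X -> R,
    (forall W : R -> Prop, open_set W -> vietoris_open X (fun F => W (f F))) ->
    exists M : R, forall F, Rabs (f F) <= M.

(* Main.v *)
Require Import Defs.
From Stdlib Require Import Reals List.
From Stdlib Require Import Lra Lia Classical ClassicalEpsilon Cantor.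
Open Scope R_scope.

Definition pt (k : nat) : nat -> Prop := fun m => m = k.

Lemma uf_mono (q : betaw) (A B : nat -> Prop) : uf q A -> (forall n, A n -> B n) -> uf q B.
Proof. destruct q as [q [h1 [h2 [h3 [h4 h5]]]]]; simpl; eauto. Qed.
Lemma uf_and q A B : uf q A -> uf q B -> uf q (fun n => A n /\ B n).
Proof. destruct q as [q [h1 [h2 [h3 [h4 h5]]]]]; simpl; eauto. Qed.
Lemma uf_nF q : ~ uf q (fun _ => False).
Proof. destruct q as [q [h1 [h2 [h3 [h4 h5]]]]]; simpl; eauto. Qed.
Lemma uf_em q A : uf q A \/ uf q (fun n => ~ A n).
Proof. destruct q as [q [h1 [h2 [h3 [h4 h5]]]]]; simpl; eauto. Qed.
Lemma uf_T q : uf q (fun _ => True).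
Proof. destruct q as [q [h1 [h2 [h3 [h4 h5]]]]]; simpl; eauto. Qed.

Lemma uf_ne q A : uf q A -> exists n, A n.
Proof.
  intros H. apply NNPP; intro C. apply (uf_nF q). apply (uf_mono q A); auto.
  intros n Hn; apply C; eauto.
Qed.

Lemma uf_pt q A k : uf q A -> uf q (pt k) -> A k.
Proof.
  intros HA Hk. destruct (uf_ne q _ (uf_and q _ _ HA Hk)) as [n [Hn Hnk]].
  unfold pt in Hnk; subst; exact Hn.
Qed.

Lemma uf_list q (l : list nat) : uf q (fun m => In m l) -> exists d, In d l /\ uf q (pt d).
Proof.
  induction l as [|a l IH]; simpl; intros H.
  - exfalso; apply (uf_nF q); exact H.
  - destruct (uf_em q (pt a)) as [Ha|Ha]; [exists a; auto|].
    assert (H' : uf q (fun m => In m l)).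
    { apply (uf_mono q _ _ (uf_and q _ _ H Ha)).
      intros n [[e|i] ne]; [exfalso; apply ne; unfold pt; auto | auto]. }
    destruct (IH H') as [d [i h]]; exists d; auto.
Qed.

Lemma openX_inter X V1 V2 : openX X V1 -> openX X V2 -> openX X (fun x => V1 x /\ V2 x).
Proof.
  intros [U1 [o1 e1]] [U2 [o2 e2]].
  exists (fun x => U1 x /\ U2 x); split.
  - intros q [h1 h2]. destruct (o1 q h1) as [A1 [a1 k1]]. destruct (o2 q h2) as [A2 [a2 k2]].
    exists (fun n => A1 n /\ A2 n); split; [apply uf_and; auto|].
    intros r hr; split; [apply k1 | apply k2]; apply (uf_mono r _ _ hr); tauto.
  - intros x; rewrite e1, e2; tauto.
Qed.

Lemma openX_full X : openX X X.
Proof.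
  exists (fun _ => True); split.
  - intros q _; exists (fun _ => True); split; [apply uf_T| auto].
  - intros x; tauto.
Qed.

Lemma openX_basic X A : openX X (fun q => X q /\ uf q A).
Proof. exists (fun q => uf q A); split; [intros q h; exists A; auto | intros; tauto]. Qed.

Lemma openX_spread X V d y : openX X V -> V (principal d) -> X y -> uf y (pt d) -> V y.
Proof.
  intros [U [o e]] hv hy hd. apply e in hv as [hu _]. destruct (o _ hu) as [A [hA k]].
  apply e; split; [|exact hy]. apply k. change (A d) in hA.
  apply (uf_mono y (pt d)); auto. intros n hn; unfold pt in hn; subst; auto.
Qed.

Lemma openX_princ X V y : (forall n, X (principal n)) -> openX X V -> V y -> exists d, V (principal d).
Proof.
  intros hX [U [o e]] hv. apply e in hv as [hu _]. destruct (o _ hu) as [A [hA k]].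
  destruct (uf_ne _ _ hA) as [d hd]. exists d. apply e; split; [apply k; exact hd| apply hX].
Qed.

Definition Dpred (X : betaw -> Prop) (l : list nat) : betaw -> Prop :=
  fun q => X q /\ exists d, In d l /\ uf q (pt d).

Lemma Dclosed X l : closedX X (Dpred X l).
Proof.
  split; [intros x [h _]; exact h|].
  exists (fun q => forall d, In d l -> ~ uf q (pt d)); split.
  - intros q hq. exists (fun m => ~ In m l). split.
    + destruct (uf_em q (fun m => In m l)) as [h|h]; auto.
      destruct (uf_list q l h) as [d [i u]]. exfalso; exact (hq d i u).
    + intros r hr d i u. exact (uf_pt r _ d hr u i).
  - intros x; unfold Dpred; split.
    + intros [hx hn]; split; auto. intros d i u; apply hn; split; eauto.
    + intros [hu hx]; split; auto. intros [_ [d [i u]]]; exact (hu d i u).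
Qed.

Definition mkD X (hX : forall n, X (principal n)) (d0 : nat) (E : list nat) : CL X.
Proof.
  exists (Dpred X (d0 :: E)). split; [apply Dclosed|].
  exists (principal d0). split; [apply hX|]. exists d0; split; [left; reflexivity| reflexivity].
Defined.

Lemma CLset_mkD X hX d0 E : CLset (mkD X hX d0 E) = Dpred X (d0 :: E).
Proof. reflexivity. Qed.

Lemma L2 X (F : CL X) : forall l, Forall (vietoris_subbasic X) l -> Forall (fun S => S F) l ->
  exists V, openX X V /\ (forall y, CLset F y -> V y) /\ exists Ms : list (betaw -> Prop),
   Forall (fun U => openX X U /\ exists y, CLset F y /\ U y) Ms /\
   forall G : CL X, (forall y, CLset G y -> V y) ->
     Forall (fun U => exists y, CLset G y /\ U y) Ms -> Forall (fun S => S G) l.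
Proof.
  induction 1 as [|S l hS hl IH]; intros hF.
  - exists X; split; [apply openX_full|]. split.
    + intros y hy. destruct (proj2_sig F) as [[h _] _]. exact (h y hy).
    + exists nil; split; auto.
  - pose proof (Forall_inv hF) as hSF; pose proof (Forall_inv_tail hF) as hlF.
    destruct (IH hlF) as [V [oV [FV [Ms [hMs hG]]]]].
    destruct hS as [U [oU [e|e]]].
    + exists (fun x => V x /\ U x); split; [apply openX_inter; auto|]. split.
      * intros y hy; split; auto. apply (proj1 (e F) hSF); auto.
      * exists Ms; split; auto. intros G hGV hGM. constructor.
        -- apply e. intros x hx; apply hGV; auto.
        -- apply hG; auto. intros y hy; apply hGV; auto.
    + exists V; split; auto; split; auto. exists (U :: Ms); split.
      * constructor; auto. split; auto. apply (proj1 (e F) hSF).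
      * intros G hGV hGM. constructor; [apply e; exact (Forall_inv hGM)|].
        apply hG; auto. exact (Forall_inv_tail hGM).
Qed.

Lemma L2b X (hX : forall n, X (principal n)) (F : CL X) V : openX X V -> (forall y, CLset F y -> V y) ->
  forall Ms, Forall (fun U => openX X U /\ exists y, CLset F y /\ U y) Ms ->
  exists E : list nat, (forall d, In d E -> V (principal d)) /\
     Forall (fun U => exists d, In d E /\ U (principal d)) Ms.
Proof.
  intros oV FV. induction 1 as [|U Ms hU _ IH].
  - exists nil; split; [intros d []| constructor].
  - destruct hU as [oU [y [hy hu]]]. destruct IH as [E [hE hM]].
    destruct (openX_princ X _ y hX (openX_inter X V U oV oU) (conj (FV y hy) hu)) as [d [dv du]].
    exists (d :: E); split.
    + intros d' [e|i]; [subst; auto| auto].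
    + constructor; [exists d; split; [left; auto| auto]|].
      eapply Forall_impl; [|exact hM]. intros U' [d' [i u]]; exists d'; split; [right|]; auto.
Qed.

Lemma L2c X hX (F : CL X) l : Forall (vietoris_subbasic X) l -> Forall (fun S => S F) l ->
  exists d0 E, Forall (fun S => S (mkD X hX d0 E)) l.
Proof.
  intros hl hF. destruct (L2 X F l hl hF) as [V [oV [FV [Ms [hMs hG]]]]].
  destruct (L2b X hX F V oV FV Ms hMs) as [E [hE hM]].
  destruct (proj2 (proj2_sig F)) as [x hx].
  destruct (openX_princ X V x hX oV (FV x hx)) as [d0 hd0].
  exists d0, E. apply hG.
  - rewrite CLset_mkD. intros y [hy [d [i u]]]. apply (openX_spread X V d y); auto.
    destruct i as [e|i]; [subst; auto| auto].
  - eapply Forall_impl; [|exact hM]. intros U [d [i u]]. exists (principal d). split; auto.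
    rewrite CLset_mkD. split; [apply hX|]. exists d; split; [right; auto| reflexivity].
Qed.

Lemma open_gt (c : R) : open_set (fun r => c < Rabs r).
Proof.
  intros x hx. assert (h : 0 < Rabs x - c) by lra. exists (mkposreal _ h).
  intros y hy. unfold disc in hy; simpl in hy.
  pose proof (Rabs_triang_inv x y). rewrite Rabs_minus_sym in hy. lra.
Qed.

Lemma open_ball (c : R) : open_set (fun r => Rabs (r - c) < 1).
Proof.
  intros x hx. assert (h : 0 < 1 - Rabs (x - c)) by lra. exists (mkposreal _ h).
  intros y hy. unfold disc in hy; simpl in hy.
  pose proof (Rabs_triang (y - x) (x - c)).
  replace (y - x + (x - c)) with (y - c) in H by ring. lra.
Qed.

Lemma free_unb (p : betaw) : free p -> forall P, uf p P -> forall N, exists n, (N <= n)%nat /\ P n.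
Proof.
  intros hf P hP N. apply NNPP; intro C.
  assert (hb : uf p (fun n => (n < N)%nat)).
  { apply (uf_mono p P); auto. intros n hn. destruct (Nat.lt_ge_cases n N); auto.
    exfalso; apply C; eauto. }
  clear hP C. induction N.
  - apply (uf_nF p). apply (uf_mono p _ _ hb). intros n hn; lia.
  - apply IHN. destruct (uf_em p (fun m => m = N)) as [h|h]; [exfalso; exact (hf N h)|].
    apply (uf_mono p _ _ (uf_and p _ _ hb h)). intros n [h1 h2]; lia.
Qed.

Definition dec (a : nat -> bool) (n : nat) : nat :=
  match excluded_middle_informative (exists k, a (to_nat (n, k)) = true) with
  | left h => proj1_sig (constructive_indefinite_description _ h)
  | right _ => O
  end.
Definition enc (t : nat -> nat) : nat -> bool :=
  fun m => let (n, k) := of_nat m in Nat.eqb k (t n).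
Lemma dec_enc t n : dec (enc t) n = t n.
Proof.
  unfold dec. destruct excluded_middle_informative as [h|h].
  - destruct constructive_indefinite_description as [k hk]; simpl.
    unfold enc in hk. rewrite cancel_of_to in hk. apply Nat.eqb_eq; auto.
  - exfalso; apply h; exists (t n); unfold enc; rewrite cancel_of_to; apply Nat.eqb_refl.
Qed.

Lemma nth_in i (d0 : nat) E : In (nth i (d0 :: E) d0) (d0 :: E).
Proof.
  destruct (Nat.lt_ge_cases i (length (d0::E))) as [h|h].
  - apply nth_In; auto.
  - rewrite nth_overflow; auto; left; auto.
Qed.

Lemma clos_closed X (L : betaw -> Prop) :
  closedX X (fun x => X x /\ forall A, uf x A -> exists z, L z /\ uf z A).
Proof.
  split; [intros x [h _]; exact h|].
  exists (fun q => exists A, uf q A /\ forall z, L z -> ~ uf z A). split.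
  - intros q [A [hA hn]]. exists A; split; auto. intros r hr; exists A; auto.
  - intros x; split.
    + intros [hx hn]. split; auto. apply NNPP; intro C. apply hn; split; auto.
      intros A hA. apply NNPP; intro C2. apply C. exists A; split; auto.
      intros z hz hzA; apply C2; eauto.
    + intros [[A [hA hn]] hx]. split; auto. intros [_ h].
      destruct (h A hA) as [z [hz hzA]]. exact (hn z hz hzA).
Qed.

Theorem corollary3p3 (X : betaw -> Prop) :
  (forall n : nat, X (principal n)) ->
  c_wstar_pseudocompact X ->
  CL_pseudocompact X.
Proof.
  intros hX hpc f hf.
  apply NNPP; intro Hub.
  assert (hD : forall n : nat, exists de : nat * list nat,
             INR n < Rabs (f (mkD X hX (fst de) (snd de)))).
  { intros n. assert (exists F, INR n < Rabs (f F)) as [F hF].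
    { apply NNPP; intro C. apply Hub. exists (INR n). intros F.
      apply Rnot_lt_le. intro h; apply C; eauto. }
    destruct (hf _ (open_gt (INR n)) F hF) as [l [hl [hlF hlG]]].
    destruct (L2c X hX F l hl hlF) as [d0 [E hE]]. exists (d0, E). apply hlG; exact hE. }
  assert (hD' : exists D : nat -> nat * list nat, forall n,
             INR n < Rabs (f (mkD X hX (fst (D n)) (snd (D n))))).
  { exists (fun n => proj1_sig (constructive_indefinite_description _ (hD n))).
    intro n; exact (proj2_sig (constructive_indefinite_description _ (hD n))). }
  clear hD. destruct hD' as [D hDn].
  set (sel := fun a n => nth (dec a n) (fst (D n) :: snd (D n)) (fst (D n))).
  destruct (hpc (fun a n q => X q /\ uf q (pt (sel a n)))) as [p [hfree hlim]].
  { intros a n. split; [apply openX_basic|]. exists (principal (sel a n)).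
    split; [apply hX| reflexivity]. }
  assert (L7 : forall a z A, p_limit X p (fun n q => X q /\ uf q (pt (sel a n))) z ->
                uf z A -> uf p (fun n => A (sel a n))).
  { intros a z A [hz hl] hA.
    assert (hn : nbhdX X z (fun q => X q /\ uf q A)).
    { exists (fun q => X q /\ uf q A); split; [apply openX_basic| split; auto]. }
    apply (uf_mono p _ _ (hl _ hn)). intros n [y [[_ h1] [_ h2]]].
    exact (uf_pt y A _ h1 h2). }
  set (Lim := fun z => exists a, p_limit X p (fun n q => X q /\ uf q (pt (sel a n))) z).
  assert (hG : closedX X (fun x => X x /\ forall A, uf x A -> exists z, Lim z /\ uf z A)
               /\ exists x, X x /\ forall A, uf x A -> exists z, Lim z /\ uf z A).
  { split; [apply clos_closed|]. destruct (hlim (fun _ => false)) as [z hz].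
    exists z. split; [exact (proj1 hz)|]. intros A hA; exists z; split; auto.
    exists (fun _ => false); auto. }
  set (G := exist _ _ hG : CL X).
  set (Gn := fun n => mkD X hX (fst (D n)) (snd (D n))).
  assert (L5 : forall S, vietoris_subbasic X S -> S G -> uf p (fun n => S (Gn n))).
  { intros S [U [oU [e|e]]] hSG.
    - pose proof (proj1 (e G) hSG) as hSG0; clear hSG; rename hSG0 into hSG.
      destruct (uf_em p (fun n => S (Gn n))) as [h|h]; auto. exfalso.
      assert (hc : forall n, exists i, ~ S (Gn n) ->
                 ~ U (principal (nth i (fst (D n) :: snd (D n)) (fst (D n))))).
      { intros n. destruct (classic (S (Gn n))) as [hs|hs]; [exists O; tauto|].
        rewrite e in hs. apply not_all_ex_not in hs as [x hx].
        apply imply_to_and in hx as [hx hxU]. unfold Gn in hx. rewrite CLset_mkD in hx.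
        destruct hx as [hxX [d [i u]]].
        destruct (In_nth _ _ (fst (D n)) i) as [k [_ hk]]. exists k. intros _ hU.
        apply hxU. rewrite hk in hU. apply (openX_spread X U d x); auto. }
      set (t := fun n => proj1_sig (constructive_indefinite_description _ (hc n))).
      assert (ht : forall n, ~ S (Gn n) ->
                 ~ U (principal (nth (t n) (fst (D n) :: snd (D n)) (fst (D n))))).
      { intro n; exact (proj2_sig (constructive_indefinite_description _ (hc n))). }
      destruct (hlim (enc t)) as [z hz].
      assert (hzG : U z).
      { apply hSG. simpl. split; [exact (proj1 hz)|]. intros A hA; exists z; split; auto.
        exists (enc t); auto. }
      destruct oU as [U' [o e']]. apply e' in hzG as [hu _].
      destruct (o _ hu) as [A [hA k]].
      destruct (uf_ne _ _ (uf_and p _ _ (L7 _ _ _ hz hA) h)) as [n [h1 h2]].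
      apply (ht n h2). unfold sel in h1. rewrite dec_enc in h1.
      apply e'. split; [apply k; exact h1| apply hX].
    - destruct (proj1 (e G) hSG) as [y [[hyX hy] hyU]].
      destruct oU as [U' [o e']]. pose proof hyU as hyU'. apply e' in hyU' as [hu _].
      destruct (o _ hu) as [A [hA k]].
      destruct (hy A hA) as [z [[a hz] hzA]].
      apply (uf_mono p _ _ (L7 _ _ _ hz hzA)). intros n hn.
      apply e. exists (principal (sel a n)). split.
      + unfold Gn. rewrite CLset_mkD. split; [apply hX|]. exists (sel a n).
        split; [apply nth_in| reflexivity].
      + apply e'. split; [apply k; exact hn| apply hX]. }
  assert (hP : forall l, Forall (vietoris_subbasic X) l -> Forall (fun S => S G) l ->
                 uf p (fun n => Forall (fun S => S (Gn n)) l)).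
  { induction 1 as [|S l hS _ IH]; intros hF.
    - apply (uf_mono p (fun _ => True)); [apply uf_T| constructor].
    - apply (uf_mono p _ _ (uf_and p _ _ (L5 S hS (Forall_inv hF)) (IH (Forall_inv_tail hF)))).
      intros n [h1 h2]; constructor; auto. }
  destruct (hf _ (open_ball (f G)) G) as [l [hl [hlG hlH]]].
  { replace (f G - f G) with 0 by ring; rewrite Rabs_R0; lra. }
  destruct (INR_unbounded (Rabs (f G) + 1)) as [N hN].
  destruct (free_unb p hfree _ (hP l hl hlG) N) as [n [hNn hn]].
  pose proof (hlH (Gn n) hn) as h1. simpl in h1. pose proof (hDn n) as h2.
  pose proof (le_INR _ _ hNn) as h3.
  pose proof (Rabs_triang_inv (f (Gn n)) (f G)). unfold Gn in *. lra.
Qed.
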